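(* Let $\mathcal{C}$ be a pre-Hilbert $*$-category and $\mathrm{Con}(\mathcal{C})$ its wide subcategory of contractions. (i) Every split monomorphism in $\mathrm{Con}(\mathcal{C})$ is isometric. (ii) The inclusion functor $\mathrm{Con}(\mathcal{C})\hookrightarrow\mathcal{C}$ preserves jointly monic wide spans. (iii) The inclusion functor $\mathrm{Con}(\mathcal{C})\hookrightarrow\mathcal{C}$ creates isometric equalisers; in particular, in $\mathrm{Con}(\mathcal{C})$ every parallel pair of morphisms has an isometric equaliser. (iv) In $\mathrm{Con}(\mathcal{C})$, every equaliser is isometric.
   Context: A $*$-category is a category with a choice of $f^*\colon Y\to X$ for each $f\colon X\to Y$ such that $1^*=1$, $(gf)^*=f^*g^*$, $(f^* )^*=f$; $f$ is an isometry if $f^*f=1$. A pre-Hilbert $*$-category is a $*$-category with (R1) a zero object, (R2) orthonormal biproducts of all pairs of objects (biproducts $(X,s_1,r_1,s_2,r_2)$ with $r_k=s_k^*$), (R3) an isometric kernel for every morphism, and (R4) every diagonal $\Delta\colon X\to X\oplus X$ a kernel of some morphism; such a category is additive. For Hermitian endomorphisms $a,b$ of $A$, $a\le b$ means $b-a=y^*y$ for some $y\colon A\to Y$. A contraction is a morphism $f$ with $f^*f\leq 1$; contractions contain all identities and are closed under composition and $*$, forming the wide $*$-subcategory $\mathrm{Con}(\mathcal{C})$. A wide span $(g_\alpha\colon Y\to Z_\alpha)_{\alpha\in I}$ is jointly monic if $g_\alpha h_1=g_\alpha h_2$ for all $\alpha$ implies $h_1=h_2$. ''Creates isometric equalisers''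 here means: for any parallel pair of contractions, an isometric equaliser of it in $\mathcal{C}$ is a morphism of $\mathrm{Con}(\mathcal{C})$ and is an equaliser of the pair in $\mathrm{Con}(\mathcal{C})$. *)

(* Defs.v *)
Set Implicit Arguments.
Unset Strict Implicit.

Record StarCat := {
  Ob : Type;
  Hom : Ob -> Ob -> Type;
  idm : forall X : Ob, Hom X X;
  comp : forall X Y Z : Ob, Hom Y Z -> Hom X Y -> Hom X Z;
  star : forall X Y : Ob, Hom X Y -> Hom Y X;
  comp_assoc : forall (W X Y Z : Ob) (h : Hom Y Z) (g : Hom X Y) (f : Hom W X),
      comp h (comp g f) = comp (comp h g) f;
  comp_idl : forall (X Y : Ob) (f : Hom X Y), comp (idm Y) f = f;
  comp_idr : forall (X Y : Ob) (f : Hom X Y), comp f (idm X) = f;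
  star_idm : forall X : Ob, star (idm X) = idm X;
  star_comp : forall (X Y Z : Ob) (g : Hom Y Z) (f : Hom X Y),
      star (comp g f) = comp (star f) (star g);
  star_star : forall (X Y : Ob) (f : Hom X Y), star (star f) = f
}.

Arguments Hom : clear implicits.
Arguments idm {s} X : rename.
Arguments comp {s X Y Z} g f : rename.
Arguments star {s X Y} f : rename.

Section Defs.
Variable C : StarCat.

Notation "g \o f" := (comp g f) (at level 40, left associativity).

Definition isometry {X Y : Ob C} (f : Hom C X Y) : Prop := star f \o f = idm X.

Definition is_zero_obj (Z : Ob C) : Prop :=
  (forall X : Ob C, exists u : Hom C X Z, forall v : Hom C X Z, v = u) /\
  (forall X : Ob C, exists u : Hom C Z X, forall v : Hom C Z X, v = u).

Definition is_zero_mor {X Y : Ob C} (f : Hom C X Y) : Prop :=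
  exists (Z : Ob C) (a : Hom C X Z) (b : Hom C Z Y), is_zero_obj Z /\ f = b \o a.

Definition is_biproduct (X1 X2 W : Ob C)
    (s1 : Hom C X1 W) (r1 : Hom C W X1) (s2 : Hom C X2 W) (r2 : Hom C W X2) : Prop :=
  r1 \o s1 = idm X1 /\ r2 \o s2 = idm X2 /\
  is_zero_mor (r2 \o s1) /\ is_zero_mor (r1 \o s2) /\
  (forall (A : Ob C) (f1 : Hom C A X1) (f2 : Hom C A X2),
      exists h : Hom C A W, r1 \o h = f1 /\ r2 \o h = f2 /\
        forall h' : Hom C A W, r1 \o h' = f1 -> r2 \o h' = f2 -> h' = h) /\
  (forall (A : Ob C) (f1 : Hom C X1 A) (f2 : Hom C X2 A),
      exists h : Hom C W A, h \o s1 = f1 /\ h \o s2 = f2 /\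
        forall h' : Hom C W A, h' \o s1 = f1 -> h' \o s2 = f2 -> h' = h).

Definition is_ortho_biproduct (X1 X2 W : Ob C)
    (s1 : Hom C X1 W) (r1 : Hom C W X1) (s2 : Hom C X2 W) (r2 : Hom C W X2) : Prop :=
  is_biproduct s1 r1 s2 r2 /\ r1 = star s1 /\ r2 = star s2.

Definition is_kernel {K X Y : Ob C} (k : Hom C K X) (f : Hom C X Y) : Prop :=
  is_zero_mor (f \o k) /\
  forall (A : Ob C) (h : Hom C A X), is_zero_mor (f \o h) ->
    exists u : Hom C A K, k \o u = h /\ forall u' : Hom C A K, k \o u' = h -> u' = u.

Definition pre_Hilbert : Prop :=
  (exists Z : Ob C, is_zero_obj Z) /\
  (forall X1 X2 : Ob C, exists (W : Ob C) (s1 : Hom C X1 W) (r1 : Hom C W X1)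
                 (s2 : Hom C X2 W) (r2 : Hom C W X2), is_ortho_biproduct s1 r1 s2 r2) /\
  (forall (X Y : Ob C) (f : Hom C X Y),
                 exists (K : Ob C) (k : Hom C K X), is_kernel k f /\ isometry k) /\
  (forall (X W : Ob C) (s1 : Hom C X W) (r1 : Hom C W X) (s2 : Hom C X W)
                 (r2 : Hom C W X) (d : Hom C X W),
                 is_ortho_biproduct s1 r1 s2 r2 -> r1 \o d = idm X -> r2 \o d = idm X ->
                 exists (Y : Ob C) (g : Hom C W Y), is_kernel d g).

(** the (canonical) sum of parallel morphisms, f + g = codiag o <f, g>,
    computed through any biproduct of B with itself *)
Definition is_sum {A B : Ob C} (f g h : Hom C A B) : Prop :=
  exists (W : Ob C) (s1 : Hom C B W) (r1 : Hom C W B) (s2 : Hom C B W) (r2 : Hom C W B)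
         (p : Hom C A W) (c : Hom C W B),
    is_biproduct s1 r1 s2 r2 /\ r1 \o p = f /\ r2 \o p = g /\
    c \o s1 = idm B /\ c \o s2 = idm B /\ h = c \o p.

(** a <= b  iff  b - a = y* y for some y, i.e. b = a + y* y *)
Definition le_herm {A : Ob C} (a b : Hom C A A) : Prop :=
  exists (Y : Ob C) (y : Hom C A Y), is_sum a (star y \o y) b.

Definition contraction {X Y : Ob C} (f : Hom C X Y) : Prop :=
  le_herm (star f \o f) (idm X).

(** equalisers inside the wide subcategory of morphisms satisfying P
    (P = everything: equalisers in C;  P = contraction: equalisers in Con(C)) *)
Definition is_equaliser_in (P : forall X Y : Ob C, Hom C X Y -> Prop)
    {E X Y : Ob C} (e : Hom C E X) (f g : Hom C X Y) : Prop :=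
  P _ _ e /\ f \o e = g \o e /\
  forall (W : Ob C) (h : Hom C W X), P _ _ h -> f \o h = g \o h ->
    exists u : Hom C W E, P _ _ u /\ e \o u = h /\
      forall u' : Hom C W E, P _ _ u' -> e \o u' = h -> u' = u.

Definition allmor : forall X Y : Ob C, Hom C X Y -> Prop := fun _ _ _ => True.
Definition conmor : forall X Y : Ob C, Hom C X Y -> Prop := fun X Y f => contraction f.

Definition jointly_monic_in (P : forall X Y : Ob C, Hom C X Y -> Prop)
    {I : Type} {Y : Ob C} {Z : I -> Ob C} (g : forall i : I, Hom C Y (Z i)) : Prop :=
  forall (W : Ob C) (h1 h2 : Hom C W Y), P _ _ h1 -> P _ _ h2 ->
    (forall i : I, g i \o h1 = g i \o h2) -> h1 = h2.

End Defs.

Notation "g \o f" := (comp g f) (at level 40, left associativity).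

(* Main.v *)
Require Import Defs.
From Stdlib Require Import IndefiniteDescription.

Section Dev.
Variable C : StarCat.
Hypothesis HC : pre_Hilbert C.

Ltac norm := repeat progress (rewrite ?star_comp, ?star_star, ?star_idm, ?comp_assoc, ?comp_idl, ?comp_idr).

Lemma gen_l {X Y Z : Ob C} {f : Hom C Y Z} {g : Hom C X Y} {h : Hom C X Z} :
  f \o g = h -> forall V (k : Hom C Z V), k \o f \o g = k \o h.
Proof. intros E V k. rewrite <- comp_assoc, E. reflexivity. Qed.

Lemma gen_l3 {X Y Z U : Ob C} {f : Hom C Z U} {g : Hom C Y Z} {e : Hom C X Y} {h : Hom C X U} :
  f \o g \o e = h -> forall V (k : Hom C U V), k \o f \o g \o e = k \o h.
Proof. intros E V k. rewrite <- E. norm. reflexivity. Qed.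

Ltac rw H := first [rewrite H | rewrite (gen_l H) | rewrite (gen_l3 H)]; norm.
Ltac tw H := try (rw H).

Lemma zero_exists (X Y : Ob C) : exists f : Hom C X Y, is_zero_mor f.
Proof.
  destruct HC as [[Z [H1 H2]] _].
  destruct (H1 X) as [a _]. destruct (H2 Y) as [b _].
  exists (b \o a). exists Z, a, b. split; [split; assumption | reflexivity].
Qed.

Definition zero (X Y : Ob C) : Hom C X Y :=
  proj1_sig (constructive_indefinite_description _ (zero_exists X Y)).
Arguments zero {X Y}.

Lemma zero_spec X Y : is_zero_mor (@zero X Y).
Proof. unfold zero. destruct constructive_indefinite_description. assumption. Qed.

Lemma zero_uniq0 {X Y} (f g : Hom C X Y) : is_zero_mor f -> is_zero_mor g -> f = g.
Proof.
  intros [Z [a [b [[HZ1 HZ2] ->]]]] [Z' [a' [b' [[HZ1' HZ2'] ->]]]].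
  destruct (HZ2 Z') as [u Hu].
  destruct (HZ1' X) as [v Hv].
  destruct (HZ2 Y) as [w Hw].
  assert (E1 : b = b' \o u) by (rewrite (Hw b), (Hw (b' \o u)); reflexivity).
  assert (E2 : a' = u \o a) by (rewrite (Hv a'), (Hv (u \o a)); reflexivity).
  rewrite E1, E2. norm. reflexivity.
Qed.

Lemma zeq {X Y} (f : Hom C X Y) : is_zero_mor f -> f = zero.
Proof. intros H. apply zero_uniq0; [exact H | apply zero_spec]. Qed.

Lemma zis {X Y} (f : Hom C X Y) : f = zero -> is_zero_mor f.
Proof. intros ->. apply zero_spec. Qed.

Lemma comp_zr {X Y Z} (g : Hom C Y Z) : g \o (@zero X Y) = zero.
Proof.
  apply zeq. destruct (zero_spec X Y) as [W [a [b [HW E]]]].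
  rewrite E. exists W, a, (g \o b). split; [exact HW | ]. norm. reflexivity.
Qed.

Lemma comp_zl {X Y Z} (g : Hom C X Y) : (@zero Y Z) \o g = zero.
Proof.
  apply zeq. destruct (zero_spec Y Z) as [W [a [b [HW E]]]].
  rewrite E. exists W, (a \o g), b. split; [exact HW | ]. norm. reflexivity.
Qed.

Lemma star_zero {X Y} : star (@zero X Y) = zero.
Proof.
  apply zeq. destruct (zero_spec X Y) as [W [a [b [HW E]]]].
  rewrite E. exists W, (star b), (star a). split; [exact HW | ]. norm. reflexivity.
Qed.

Ltac normz := repeat progress (norm; rewrite ?comp_zr, ?comp_zl, ?star_zero).

Lemma iso_mono {X Y Z} (k : Hom C X Y) (x y : Hom C Z X) :
  isometry k -> k \o x = k \o y -> x = y.
Proof.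
  intros Hk E. rewrite <- (comp_idl x), <- (comp_idl y). rewrite <- Hk.
  rewrite <- !comp_assoc, E. reflexivity.
Qed.

Lemma ker_zero {K X Y} {k : Hom C K X} {f : Hom C X Y} : is_kernel k f -> f \o k = zero.
Proof. intros [H _]. apply zeq, H. Qed.

Lemma ker_fac {K X Y A} {k : Hom C K X} {f : Hom C X Y} {h : Hom C A X} :
  is_kernel k f -> f \o h = zero -> exists u, k \o u = h.
Proof. intros [_ H] E. destruct (H A h) as [u [Hu _]]. rewrite E; apply zero_spec. eauto. Qed.

Section BP.
Context {X1 X2 W : Ob C} {s1 : Hom C X1 W} {r1 : Hom C W X1} {s2 : Hom C X2 W} {r2 : Hom C W X2}.
Hypothesis Hb : is_biproduct s1 r1 s2 r2.

Lemma bp11 : r1 \o s1 = idm X1. Proof. apply Hb. Qed.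
Lemma bp22 : r2 \o s2 = idm X2. Proof. apply Hb. Qed.
Lemma bp21 : r2 \o s1 = zero. Proof. apply zeq, Hb. Qed.
Lemma bp12 : r1 \o s2 = zero. Proof. apply zeq, Hb. Qed.

Lemma bp_pext {A} (h h' : Hom C A W) : r1 \o h = r1 \o h' -> r2 \o h = r2 \o h' -> h = h'.
Proof.
  intros E1 E2. destruct Hb as (_&_&_&_&P&_).
  destruct (P A (r1 \o h) (r2 \o h)) as [h0 [_ [_ U]]].
  rewrite (U h) by reflexivity. rewrite (U h'); auto.
Qed.

Lemma bp_cext {A} (h h' : Hom C W A) : h \o s1 = h' \o s1 -> h \o s2 = h' \o s2 -> h = h'.
Proof.
  intros E1 E2. destruct Hb as (_&_&_&_&_&P).
  destruct (P A (h \o s1) (h \o s2)) as [h0 [_ [_ U]]].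
  rewrite (U h) by reflexivity. rewrite (U h'); auto.
Qed.

Lemma bp_pair {A} (f1 : Hom C A X1) (f2 : Hom C A X2) : exists h, r1 \o h = f1 /\ r2 \o h = f2.
Proof. destruct Hb as (_&_&_&_&P&_). destruct (P A f1 f2) as [h [? [? _]]]. eauto. Qed.

Lemma bp_copair {A} (f1 : Hom C X1 A) (f2 : Hom C X2 A) : exists h, h \o s1 = f1 /\ h \o s2 = f2.
Proof. destruct Hb as (_&_&_&_&_&P). destruct (P A f1 f2) as [h [? [? _]]]. eauto. Qed.

Lemma bp_swap : is_biproduct s2 r2 s1 r1.
Proof.
  destruct Hb as (a&b&c&d&P&Q). split; [|split; [|split; [|split; [|split]]]]; auto.
  - intros A f1 f2. destruct (P A f2 f1) as [h [? [? U]]]. exists h. split; [|split]; auto.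
  - intros A f1 f2. destruct (Q A f2 f1) as [h [? [? U]]]. exists h. split; [|split]; auto.
Qed.
End BP.


Lemma bp_ex (X1 X2 : Ob C) : exists W (s1 : Hom C X1 W) r1 (s2 : Hom C X2 W) r2,
  is_biproduct s1 r1 s2 r2 /\ r1 = star s1 /\ r2 = star s2.
Proof. destruct HC as (_&R2&_). destruct (R2 X1 X2) as (W&s1&r1&s2&r2&H&E1&E2). exists W, s1, r1, s2, r2. auto. Qed.

Lemma G1 {A B Y1 Y2 W : Ob C} {s1 : Hom C Y1 W} {r1 : Hom C W Y1} {s2 : Hom C Y2 W} {r2 : Hom C W Y2}
  (Hb : is_biproduct s1 r1 s2 r2) (h : Hom C W B) (p : Hom C A W) A1 A2 x1 x2 :
  h \o s1 = A1 -> h \o s2 = A2 -> r1 \o p = x1 -> r2 \o p = x2 -> is_sum (A1 \o x1) (A2 \o x2) (h \o p).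
Proof.
  intros E1 E2 F1 F2.
  destruct (bp_ex B B) as (V&t1&p1&t2&p2&Hv&_&_).
  destruct (bp_pair Hv (A1 \o r1) (A2 \o r2)) as [q [Q1 Q2]].
  destruct (bp_copair Hv (idm B) (idm B)) as [c [C1 C2]].
  assert (Hqs1 : q \o s1 = t1 \o A1).
  { apply (bp_pext Hv); norm; tw Q1; tw Q2; tw (bp11 Hb); tw (bp21 Hb); tw (bp11 Hv); tw (bp21 Hv); normz; reflexivity. }
  assert (Hqs2 : q \o s2 = t2 \o A2).
  { apply (bp_pext Hv); norm; tw Q1; tw Q2; tw (bp22 Hb); tw (bp12 Hb); tw (bp22 Hv); tw (bp12 Hv); normz; reflexivity. }
  assert (Hc : c \o q = h).
  { apply (bp_cext Hb); norm; [rw Hqs1; rw C1; auto | rw Hqs2; rw C2; auto]. }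
  exists V, t1, p1, t2, p2, (q \o p), c.
  split; [exact Hv|]. split; [norm; rw Q1; rw F1; reflexivity|].
  split; [norm; rw Q2; rw F2; reflexivity|].
  split; [exact C1|]. split; [exact C2|]. rewrite <- Hc. norm. reflexivity.
Qed.


Lemma sum_unique {A B : Ob C} (a b h h' : Hom C A B) : is_sum a b h -> is_sum a b h' -> h = h'.
Proof.
  intros (W&s1&r1&s2&r2&p&c&Hb&P1&P2&C1&C2&->) (W'&s1'&r1'&s2'&r2'&p'&c'&Hb'&P1'&P2'&C1'&C2'&->).
  destruct (bp_copair Hb s1' s2') as [f [F1 F2]].
  assert (Hc : c' \o f = c).
  { apply (bp_cext Hb); norm; [rw F1; rewrite C1', C1 | rw F2; rewrite C2', C2]; reflexivity. }
  assert (H1 : r1' \o f = r1).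
  { apply (bp_cext Hb); norm; [rw F1; rw (bp11 Hb'); rw (bp11 Hb) | rw F2; rw (bp12 Hb'); rw (bp12 Hb)]; reflexivity. }
  assert (H2 : r2' \o f = r2).
  { apply (bp_cext Hb); norm; [rw F1; rw (bp21 Hb'); rw (bp21 Hb) | rw F2; rw (bp22 Hb'); rw (bp22 Hb)]; reflexivity. }
  assert (Hp : f \o p = p').
  { apply (bp_pext Hb'); norm; [rw H1; rewrite P1, P1' | rw H2; rewrite P2, P2']; reflexivity. }
  rewrite <- Hc, <- Hp. norm. reflexivity.
Qed.

Lemma sum_exists {A B : Ob C} (a b : Hom C A B) : exists h, is_sum a b h.
Proof.
  destruct (bp_ex B B) as (W&s1&r1&s2&r2&Hb&_&_).
  destruct (bp_pair Hb a b) as [p [P1 P2]].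
  destruct (bp_copair Hb (idm B) (idm B)) as [c [C1 C2]].
  exists (c \o p). exists W, s1, r1, s2, r2, p, c. auto 10.
Qed.

Definition add {A B : Ob C} (a b : Hom C A B) : Hom C A B :=
  proj1_sig (constructive_indefinite_description _ (sum_exists a b)).

Lemma add_spec {A B : Ob C} (a b : Hom C A B) : is_sum a b (add a b).
Proof. unfold add. destruct constructive_indefinite_description. assumption. Qed.

Lemma add_eq {A B : Ob C} (a b h : Hom C A B) : is_sum a b h -> add a b = h.
Proof. intros H. apply (sum_unique a b); [apply add_spec | exact H]. Qed.

Lemma G1a {A B Y1 Y2 W : Ob C} {s1 : Hom C Y1 W} {r1 : Hom C W Y1} {s2 : Hom C Y2 W} {r2 : Hom C W Y2}
  (Hb : is_biproduct s1 r1 s2 r2) (h : Hom C W B) (p : Hom C A W) A1 A2 x1 x2 :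
  h \o s1 = A1 -> h \o s2 = A2 -> r1 \o p = x1 -> r2 \o p = x2 -> add (A1 \o x1) (A2 \o x2) = h \o p.
Proof. intros. apply add_eq. eapply G1; eauto. Qed.

Lemma G1i {A B W : Ob C} {s1 : Hom C B W} {r1 : Hom C W B} {s2 : Hom C B W} {r2 : Hom C W B}
  (Hb : is_biproduct s1 r1 s2 r2) (h : Hom C W B) (p : Hom C A W) x1 x2 :
  h \o s1 = idm B -> h \o s2 = idm B -> r1 \o p = x1 -> r2 \o p = x2 -> add x1 x2 = h \o p.
Proof. intros. rewrite <- (comp_idl x1), <- (comp_idl x2). eapply G1a; eauto. Qed.

Lemma add_comm {A B : Ob C} (a b : Hom C A B) : add a b = add b a.
Proof.
  destruct (bp_ex B B) as (W&s1&r1&s2&r2&Hb&_&_).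
  destruct (bp_pair Hb a b) as [p [P1 P2]].
  destruct (bp_copair Hb (idm B) (idm B)) as [c [C1 C2]].
  rewrite (G1i Hb c p a b) by auto. symmetry. apply (G1i (bp_swap Hb)); auto.
Qed.

Lemma add_0r {A B : Ob C} (a : Hom C A B) : add a zero = a.
Proof.
  destruct (bp_ex B B) as (W&s1&r1&s2&r2&Hb&_&_).
  destruct (bp_copair Hb (idm B) (idm B)) as [c [C1 C2]].
  rewrite (G1i Hb c (s1 \o a) a zero); auto;
  norm; tw C1; tw (bp11 Hb); tw (bp21 Hb); normz; reflexivity.
Qed.

Lemma add_0l {A B : Ob C} (a : Hom C A B) : add zero a = a.
Proof. rewrite add_comm. apply add_0r. Qed.

Lemma comp_add_l {A B D : Ob C} (g : Hom C B D) (a b : Hom C A B) : g \o add a b = add (g \o a) (g \o b).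
Proof.
  destruct (bp_ex B B) as (W&s1&r1&s2&r2&Hb&_&_).
  destruct (bp_pair Hb a b) as [p [P1 P2]].
  destruct (bp_copair Hb (idm B) (idm B)) as [c [C1 C2]].
  rewrite (G1i Hb c p a b) by auto. symmetry. rewrite comp_assoc.
  apply (G1a Hb); auto; norm; [rw C1 | rw C2]; reflexivity.
Qed.

Lemma comp_add_r {A' A B : Ob C} (a b : Hom C A B) (x : Hom C A' A) : add a b \o x = add (a \o x) (b \o x).
Proof.
  destruct (bp_ex B B) as (W&s1&r1&s2&r2&Hb&_&_).
  destruct (bp_pair Hb a b) as [p [P1 P2]].
  destruct (bp_copair Hb (idm B) (idm B)) as [c [C1 C2]].
  rewrite (G1i Hb c p a b) by auto. symmetry. rewrite <- comp_assoc.
  apply (G1i Hb); auto; norm; [rw P1 | rw P2]; reflexivity.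
Qed.


Lemma add_assoc {A B : Ob C} (a b d : Hom C A B) : add (add a b) d = add a (add b d).
Proof.
  destruct (bp_ex B B) as (W&s1&r1&s2&r2&Hw&_&_).
  destruct (bp_copair Hw (idm B) (idm B)) as [c [C1 C2]].
  destruct (bp_pair Hw a b) as [pab [Pa Pb]].
  destruct (bp_pair Hw b d) as [pbd [Pb' Pd]].
  rewrite (G1i Hw c pab a b), (G1i Hw c pbd b d) by auto.
  destruct (bp_ex W B) as (W1&u1&q1&u2&q2&H1&_&_).
  destruct (bp_ex B W) as (W2&v1&o1&v2&o2&H2&_&_).
  destruct (bp_copair H1 c (idm B)) as [h1 [K1 K2]].
  destruct (bp_copair H2 (idm B) c) as [h2 [L1 L2]].
  destruct (bp_pair H1 pab d) as [P [PP1 PP2]].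
  destruct (bp_pair H2 a pbd) as [P' [PQ1 PQ2]].
  rewrite <- (comp_idl d). rewrite <- (comp_idl a).
  rewrite (G1a H1 h1 P c (idm B) pab d) by auto.
  rewrite (G1a H2 h2 P' (idm B) c a pbd) by auto.
  destruct (bp_pair Hw (r2 \o q1) q2) as [psi [S1 S2]].
  destruct (bp_pair H2 (r1 \o q1) psi) as [f [F1 F2]].
  assert (Hf : f \o P = P').
  { apply (bp_pext H2); norm.
    - rw F1. rw PP1. rw Pa. rewrite PQ1. reflexivity.
    - rw F2. rewrite PQ2. apply (bp_pext Hw); norm.
      + rw S1. rw PP1. rw Pb. rewrite Pb'. reflexivity.
      + rw S2. rewrite PP2, Pd. reflexivity. }
  assert (Hh : h2 \o f = h1).
  { apply (bp_cext H1); norm.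
    - rewrite K1. apply (bp_cext Hw); norm.
      + assert (E : f \o u1 \o s1 = v1).
        { apply (bp_pext H2); norm.
          - rw F1. rw (bp11 H1). rw (bp11 Hw). rw (bp11 H2). reflexivity.
          - rw F2. rw (bp21 H2). apply (bp_pext Hw); norm.
            + rw S1. rw (bp11 H1). rw (bp21 Hw). normz. reflexivity.
            + rw S2. rw (bp21 H1). normz. reflexivity. }
        rw E. rewrite L1, C1. reflexivity.
      + assert (E : f \o u1 \o s2 = v2 \o s1).
        { apply (bp_pext H2); norm.
          - rw F1. rw (bp11 H1). rw (bp12 Hw). rw (bp12 H2). normz. reflexivity.
          - rw F2. rw (bp22 H2). apply (bp_pext Hw); norm.
            + rw S1. rw (bp11 H1). rw (bp22 Hw). rw (bp11 Hw). reflexivity.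
            + rw S2. rw (bp21 H1). rw (bp21 Hw). normz. reflexivity. }
        rw E. rw L2. rewrite C1, C2. reflexivity.
    - assert (E : f \o u2 = v2 \o s2).
      { apply (bp_pext H2); norm.
        - rw F1. rw (bp12 H1). rw (bp12 H2). normz. reflexivity.
        - rw F2. rw (bp22 H2). apply (bp_pext Hw); norm.
          + rw S1. rw (bp12 H1). rw (bp12 Hw). normz. reflexivity.
          + rw S2. rw (bp22 H1). rw (bp22 Hw). reflexivity. }
      rw E. rw L2. rewrite C2, K2. reflexivity. }
  rewrite <- Hh, <- Hf. norm. reflexivity.
Qed.

Lemma R3' {X Y : Ob C} (f : Hom C X Y) : exists K (k : Hom C K X), is_kernel k f /\ isometry k.
Proof. destruct HC as (_&_&R3&_). apply R3. Qed.

Lemma closure {A B : Ob C} (D : Hom C A B) : exists K (n : Hom C K B) M (m : Hom C M B),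
  isometry n /\ is_kernel n (star D) /\ isometry m /\ is_kernel m (star n) /\
  (exists u, m \o u = D) /\ (forall V (phi : Hom C B V), phi \o D = zero -> phi \o m = zero).
Proof.
  destruct (R3' (star D)) as (K&n&Hn&In). destruct (R3' (star n)) as (M&m&Hm&Im).
  assert (Hu : star n \o D = zero).
  { transitivity (star (star D \o n)); [norm; reflexivity|]. rewrite (ker_zero Hn). apply star_zero. }
  destruct (ker_fac Hm Hu) as [u Eu].
  assert (ZE : forall V (v : Hom C M V), v \o u = zero -> v = zero).
  { intros V v Hv.
    assert (H0 : star D \o (m \o star v) = zero).
    { transitivity (star (v \o star m \o D)); [norm; reflexivity|].
      assert (Hz : v \o star m \o D = zero).
      { rewrite <- Eu, comp_assoc, <- (comp_assoc v (star m) m), Im, comp_idr. exact Hv. }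
      rewrite Hz. apply star_zero. }
    destruct (ker_fac Hn H0) as [w Ew].
    assert (H1 : w = zero).
    { rewrite <- (comp_idl w), <- In, <- comp_assoc, Ew, comp_assoc, (ker_zero Hm). normz. reflexivity. }
    assert (H2 : m \o star v = zero) by (rewrite <- Ew, H1; normz; reflexivity).
    assert (H3 : star v = zero) by (rewrite <- (comp_idl (star v)), <- Im, <- comp_assoc, H2; normz; reflexivity).
    rewrite <- (star_star v), H3. apply star_zero. }
  exists K, n, M, m. split; [exact In|]. split; [exact Hn|]. split; [exact Im|]. split; [exact Hm|].
  split; [exists u; exact Eu|].
  intros V phi E. apply ZE. rewrite <- comp_assoc, Eu. exact E.
Qed.

Lemma positive {X Y : Ob C} (f : Hom C X Y) : star f \o f = zero -> f = zero.
Proof.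
  intros E. destruct (R3' (star f)) as (K&k&Hk&Ik).
  destruct (ker_fac Hk E) as [u Eu].
  assert (Hu : u = zero).
  { rewrite <- (comp_idl u), <- Ik, <- comp_assoc, Eu.
    transitivity (star (star f \o k)); [norm; reflexivity|]. rewrite (ker_zero Hk). apply star_zero. }
  rewrite <- Eu, Hu. normz. reflexivity.
Qed.

Lemma eqlem {X Y : Ob C} (f g : Hom C X Y) : exists Q (rho : Hom C X Q),
  forall W (h : Hom C W X), f \o h = g \o h <-> rho \o h = zero.
Proof.
  destruct (bp_ex Y Y) as (V&s1&r1&s2&r2&Hb&E1&E2).
  destruct (bp_pair Hb (idm Y) (idm Y)) as [Dl [D1 D2]].
  destruct HC as (_&_&_&R4).
  destruct (R4 Y V s1 r1 s2 r2 Dl (conj Hb (conj E1 E2)) D1 D2) as (Q&q&Hq).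
  destruct (bp_pair Hb f g) as [fg [G1' G2']].
  exists Q, (q \o fg). intros W h. split.
  - intros E. assert (Ef : fg \o h = Dl \o (f \o h)).
    { apply (bp_pext Hb); norm; [rw G1'; rw D1 | rw G2'; rw D2; rewrite E]; reflexivity. }
    rewrite <- comp_assoc, Ef, comp_assoc, (ker_zero Hq). normz. reflexivity.
  - intros E. rewrite <- comp_assoc in E. destruct (ker_fac Hq E) as [w Ew].
    rewrite <- G1', <- G2', <- !comp_assoc, <- Ew. norm. rw D1. rw D2. reflexivity.
Qed.


Lemma neg_one (Y : Ob C) : exists n : Hom C Y Y, add (idm Y) n = zero.
Proof.
  destruct (bp_ex Y Y) as (W&s1&r1&s2&r2&Hb&E1&E2).
  destruct (bp_pair Hb (idm Y) (idm Y)) as [Dl [D1 D2]].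
  pose proof HC as (_&_&_&R4).
  destruct (R4 Y W s1 r1 s2 r2 Dl (conj Hb (conj E1 E2)) D1 D2) as (Q&q&Hq).
  destruct (closure Dl) as (K&k&M&m&Ik&Hk&Im&Hm&_&Cl).
  assert (Fac : forall V (h : Hom C V W), star k \o h = zero -> exists w, Dl \o w = h).
  { intros V h Eh. destruct (ker_fac Hm Eh) as [v Ev].
    assert (H : q \o m = zero) by (apply Cl; apply (ker_zero Hq)).
    destruct (ker_fac Hq H) as [w' Ew']. exists (w' \o v). rewrite comp_assoc, Ew'. exact Ev. }
  assert (S1 : star r1 = s1) by (rewrite E1; apply star_star).
  assert (S2 : star r2 = s2) by (rewrite E2; apply star_star).
  assert (N1 : star Dl \o s1 = idm Y) by (rewrite <- S1, <- star_comp, D1; apply star_idm).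
  assert (N2 : star Dl \o s2 = idm Y) by (rewrite <- S2, <- star_comp, D2; apply star_idm).
  set (a := r1 \o k). set (b := r2 \o k).
  assert (Hab : add a b = zero).
  { rewrite (G1i Hb (star Dl) k a b N1 N2 eq_refl eq_refl). apply (ker_zero Hk). }
  destruct (bp_pair Hb r2 r1) as [tau [T1 T2]].
  assert (Ts1 : tau \o s1 = s2).
  { apply (bp_pext Hb); norm; [rw T1; rw (bp21 Hb); rw (bp12 Hb) | rw T2; rw (bp11 Hb); rw (bp22 Hb)]; reflexivity. }
  assert (Ts2 : tau \o s2 = s1).
  { apply (bp_pext Hb); norm; [rw T1; rw (bp22 Hb); rw (bp11 Hb) | rw T2; rw (bp12 Hb); rw (bp21 Hb)]; reflexivity. }
  assert (Nt : star Dl \o tau = star Dl).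
  { apply (bp_cext Hb); norm; [rw Ts1; rewrite N1, N2 | rw Ts2; rewrite N1, N2]; reflexivity. }
  assert (Htk : star Dl \o (tau \o k) = zero) by (rewrite comp_assoc, Nt; apply (ker_zero Hk)).
  destruct (ker_fac Hk Htk) as [t Et].
  assert (TT : tau \o tau = idm W).
  { apply (bp_pext Hb); norm; [rw T1; rw T2 | rw T2; rw T1]; reflexivity. }
  assert (tt : t \o t = idm K).
  { apply (iso_mono k); [exact Ik|]. rewrite comp_assoc, Et, <- comp_assoc, Et, comp_assoc, TT. norm. reflexivity. }
  assert (Ht : add (idm K) t = zero).
  { apply (iso_mono k); [exact Ik|]. rewrite comp_add_l, comp_idr, Et, comp_zr.
    apply (bp_pext Hb); rewrite !comp_add_l, !comp_zr.
    - rewrite comp_assoc, T1. exact Hab.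
    - rewrite comp_assoc, T2. rewrite add_comm. exact Hab. }
  assert (Hb' : b = a \o t).
  { unfold a, b. rewrite <- comp_assoc, Et, comp_assoc, T1. reflexivity. }
  assert (Ska : star k \o s1 = star a) by (unfold a; rewrite star_comp, S1; reflexivity).
  assert (Hh : star k \o add s1 (k \o t \o star a) = zero).
  { rewrite comp_add_l, Ska, !comp_assoc, Ik, comp_idl.
    rewrite <- (comp_idl (star a)) at 1. rewrite <- comp_add_r, Ht. apply comp_zl. }
  destruct (Fac _ _ Hh) as [w Ew].
  assert (EQ : add (idm Y) (a \o t \o star a) = a \o star a).
  { transitivity (r1 \o (Dl \o w)).
    - rewrite Ew, comp_add_l, (bp11 Hb). unfold a. norm. reflexivity.
    - rewrite comp_assoc, D1, <- D2, <- comp_assoc, Ew, comp_add_l, (bp21 Hb), add_0l.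
      rewrite !comp_assoc. change (r2 \o k) with b. rewrite Hb', <- (comp_assoc a t t), tt, comp_idr. reflexivity. }
  set (c' := add (star a) (star a)).
  assert (One : idm Y = a \o c').
  { unfold c'. rewrite comp_add_l, <- EQ at 1. rewrite add_assoc.
    assert (E : add (a \o t \o star a) (a \o star a) = a \o add t (idm K) \o star a)
      by (rewrite comp_add_l, comp_idr, comp_add_r; reflexivity).
    rewrite E, (add_comm t (idm K)), Ht, comp_zr, comp_zl, add_0r. reflexivity. }
  exists (a \o t \o c').
  assert (E : add (a \o c') (a \o t \o c') = a \o add (idm K) t \o c')
    by (rewrite comp_add_l, comp_idr, comp_add_r; reflexivity).
  rewrite One at 1. rewrite E, Ht, comp_zr, comp_zl. reflexivity.
Qed.

Lemma neg_ex {X Y : Ob C} (f : Hom C X Y) : exists g, add f g = zero.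
Proof.
  destruct (neg_one Y) as [n Hn]. exists (n \o f).
  rewrite <- (comp_idl f) at 1. rewrite <- comp_add_r, Hn. apply comp_zl.
Qed.

Lemma add_cancel {X Y : Ob C} (x y z : Hom C X Y) : add x y = add x z -> y = z.
Proof.
  intros E. destruct (neg_ex x) as [g Hg].
  rewrite <- (add_0l y), <- (add_0l z), <- Hg, (add_comm x g), !add_assoc, E. reflexivity.
Qed.


Lemma contr_add {X Y : Ob C} (f : Hom C X Y) : contraction f ->
  exists Z (y : Hom C X Z), add (star f \o f) (star y \o y) = idm X.
Proof. intros (Z&y&H). exists Z, y. apply add_eq, H. Qed.

Lemma contr_eq {X Y Y' : Ob C} (f : Hom C X Y) (g : Hom C X Y') :
  star f \o f = star g \o g -> contraction g -> contraction f.
Proof. unfold contraction, le_herm. intros ->. auto. Qed.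

Lemma iso_contr {X Y : Ob C} (f : Hom C X Y) : isometry f -> contraction f.
Proof.
  intros Hf. unfold contraction, le_herm. exists X, (zero : Hom C X X).
  unfold isometry in Hf. rewrite Hf, star_zero, comp_zr.
  pose proof (add_spec (idm X) zero) as H. rewrite add_0r in H. exact H.
Qed.

Lemma part_i {X Y : Ob C} (f : Hom C X Y) (g : Hom C Y X) :
  contraction f -> contraction g -> g \o f = idm X -> isometry f.
Proof.
  intros Hf Hg Hgf.
  destruct (contr_add f Hf) as (Y1&y&Ey). destruct (contr_add g Hg) as (Z1&z&Ez).
  set (w := z \o f).
  assert (Ef : star f \o f = add (idm X) (star w \o w)).
  { transitivity (star f \o idm Y \o f); [norm; reflexivity|].
    rewrite <- Ez, comp_add_l, comp_add_r.
    assert (A1 : star f \o (star g \o g) \o f = idm X).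
    { transitivity (star (g \o f) \o (g \o f)); [norm; reflexivity|]. rewrite Hgf. norm. reflexivity. }
    assert (A2 : star f \o (star z \o z) \o f = star w \o w) by (unfold w; norm; reflexivity).
    rewrite A1, A2. reflexivity. }
  rewrite Ef, add_assoc in Ey.
  assert (S : add (star w \o w) (star y \o y) = zero).
  { apply (add_cancel (idm X)). rewrite Ey, add_0r. reflexivity. }
  destruct (bp_ex Z1 Y1) as (V&s1&r1&s2&r2&Hb&E1&E2).
  destruct (bp_pair Hb w y) as [D [D1 D2]].
  assert (S1 : star r1 = s1) by (rewrite E1; apply star_star).
  assert (S2 : star r2 = s2) by (rewrite E2; apply star_star).
  assert (HD : add (star w \o w) (star y \o y) = star D \o D).
  { apply (G1a Hb); auto.
    - rewrite <- S1, <- star_comp, D1. reflexivity.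
    - rewrite <- S2, <- star_comp, D2. reflexivity. }
  rewrite HD in S. apply positive in S.
  assert (Hw : w = zero) by (rewrite <- D1, S; apply comp_zr).
  unfold isometry. rewrite Ef, Hw, star_zero, comp_zr, add_0r. reflexivity.
Qed.

Lemma part_ii (I : Type) (Y : Ob C) (Z : I -> Ob C) (g : forall i : I, Hom C Y (Z i)) :
  jointly_monic_in (@conmor C) g -> jointly_monic_in (@allmor C) g.
Proof.
  unfold jointly_monic_in. intros Hj W h1 h2 _ _ Hi.
  destruct (bp_ex Y Y) as (V&s1&r1&s2&r2&Hb&E1&E2).
  destruct (bp_pair Hb h1 h2) as [D [D1 D2]].
  destruct (closure D) as (K&n&M&m&In&Hn&Im&Hm&[u Eu]&Cl).
  assert (S1 : star r1 = s1) by (rewrite E1; apply star_star).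
  assert (S2 : star r2 = s2) by (rewrite E2; apply star_star).
  assert (T1 : star (r1 \o m) = star m \o s1) by (rewrite star_comp, S1; reflexivity).
  assert (T2 : star (r2 \o m) = star m \o s2) by (rewrite star_comp, S2; reflexivity).
  assert (C1 : contraction (r1 \o m)).
  { exists Y, (r2 \o m). rewrite T1, T2. unfold isometry in Im. rewrite <- Im.
    apply (G1 Hb); reflexivity. }
  assert (C2 : contraction (r2 \o m)).
  { exists Y, (r1 \o m). rewrite T1, T2. unfold isometry in Im. rewrite <- Im.
    apply (G1 (bp_swap Hb)); reflexivity. }
  assert (Hx : r1 \o m = r2 \o m).
  { apply (Hj M _ _ C1 C2). intros i.
    destruct (eqlem (g i \o r1) (g i \o r2)) as (Q&rho&Hr).
    rewrite !comp_assoc. apply Hr. apply Cl. apply Hr.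
    rewrite <- !comp_assoc, D1, D2. apply Hi. }
  rewrite <- D1, <- D2, <- Eu, !comp_assoc, Hx. reflexivity.
Qed.

Lemma part_iiia {E X Y : Ob C} (e : Hom C E X) (f g : Hom C X Y) :
  is_equaliser_in (@allmor C) e f g -> isometry e -> is_equaliser_in (@conmor C) e f g.
Proof.
  intros (_&Efg&U) Ie. split; [apply iso_contr; exact Ie|]. split; [exact Efg|].
  intros W h Hh Eh. destruct (U W h I Eh) as (u&_&Eu&Uu). exists u. split.
  - apply (contr_eq u h); [|exact Hh]. rewrite <- Eu. norm. rw Ie. reflexivity.
  - split; [exact Eu|]. intros u' _ Eu'. apply Uu; [exact I | exact Eu'].
Qed.

Lemma part_iiib {X Y : Ob C} (f g : Hom C X Y) :
  exists E (e : Hom C E X), is_equaliser_in (@conmor C) e f g /\ isometry e.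
Proof.
  destruct (eqlem f g) as (Q&rho&Hr). destruct (R3' rho) as (K&e&He&Ie).
  exists K, e. split; [|exact Ie]. apply part_iiia; [|exact Ie].
  split; [exact I|]. split; [apply Hr, (ker_zero He)|].
  intros W h _ Eh. apply Hr in Eh. destruct (ker_fac He Eh) as [u Eu].
  exists u. split; [exact I|]. split; [exact Eu|].
  intros u' _ Eu'. apply (iso_mono e); [exact Ie|]. rewrite Eu, Eu'. reflexivity.
Qed.

Lemma part_iv {E X Y : Ob C} (e : Hom C E X) (f g : Hom C X Y) :
  is_equaliser_in (@conmor C) e f g -> isometry e.
Proof.
  intros (Ce&Efg&U).
  destruct (part_iiib f g) as (M&m&(Cm&Efm&Um)&Im).
  destruct (Um E e Ce Efg) as (phi&Cphi&Ephi&_).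
  destruct (U M m Cm Efm) as (psi&Cpsi&Epsi&_).
  assert (H1 : phi \o psi = idm M).
  { apply (iso_mono m); [exact Im|]. rewrite comp_assoc, Ephi, Epsi, comp_idr. reflexivity. }
  pose proof (part_i psi phi Cpsi Cphi H1) as Ipsi.
  destruct (U E e Ce Efg) as (u0&_&_&Uu0).
  assert (H2 : psi \o phi = idm E).
  { assert (A1 : conmor (psi \o phi)).
    { apply (contr_eq _ e); [|exact Ce]. rewrite <- Ephi. norm. rw Ipsi. rw Im. reflexivity. }
    assert (A2 : e \o (psi \o phi) = e) by (rewrite comp_assoc, Epsi, Ephi; reflexivity).
    assert (A3 : conmor (idm E)) by (apply iso_contr; unfold isometry; rewrite star_idm, comp_idl; reflexivity).
    assert (A4 : e \o idm E = e) by apply comp_idr.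
    rewrite (Uu0 _ A1 A2), (Uu0 _ A3 A4). reflexivity. }
  pose proof (part_i phi psi Cphi Cpsi H2) as Iphi.
  unfold isometry. rewrite <- Ephi. norm. rw Im. exact Iphi.
Qed.

End Dev.

Theorem proposition7p4 (C : StarCat) (HC : pre_Hilbert C) :
  (* (i) split monomorphisms in Con(C) are isometric *)
  (forall (X Y : Ob C) (f : Hom C X Y) (g : Hom C Y X),
      contraction f -> contraction g -> g \o f = idm X -> isometry f) /\
  (* (ii) Con(C) -> C preserves jointly monic wide spans *)
  (forall (I : Type) (Y : Ob C) (Z : I -> Ob C) (g : forall i : I, Hom C Y (Z i)),
      (forall i : I, contraction (g i)) ->
      jointly_monic_in (@conmor C) g -> jointly_monic_in (@allmor C) g) /\
  (* (iii) Con(C) -> C creates isometric equalisers ... *)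
  (forall (E X Y : Ob C) (e : Hom C E X) (f g : Hom C X Y),
      contraction f -> contraction g ->
      is_equaliser_in (@allmor C) e f g -> isometry e ->
      is_equaliser_in (@conmor C) e f g) /\
  (* ... in particular every parallel pair in Con(C) has an isometric equaliser *)
  (forall (X Y : Ob C) (f g : Hom C X Y),
      contraction f -> contraction g ->
      exists (E : Ob C) (e : Hom C E X), is_equaliser_in (@conmor C) e f g /\ isometry e) /\
  (* (iv) every equaliser in Con(C) is isometric *)
  (forall (E X Y : Ob C) (e : Hom C E X) (f g : Hom C X Y),
      contraction f -> contraction g ->
      is_equaliser_in (@conmor C) e f g -> isometry e).
Proof.
  split; [|split; [|split; [|split]]].
  - intros X Y f g Hf Hg Hgf. exact (part_i C HC f g Hf Hg Hgf).
  - intros I Y Z g _ Hj. exact (part_ii C HC I Y Z g Hj).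
  - intros E X Y e f g _ _ He Ie. exact (part_iiia C HC e f g He Ie).
  - intros X Y f g _ _. exact (part_iiib C HC f g).
  - intros E X Y e f g _ _ He. exact (part_iv C HC e f g He).
Qed.
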